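(* Let $\Lambda\subset\mathbb{R}^d$ be a full-rank lattice, let $\Delta\in\mathbb{R}^d$, and let $P_\Delta=(\Lambda+\Delta)\cap[0,1)^d$. If $|P_\Delta|\ge 2$, then \[ \rho(P_{\Delta})\le \begin{cases} 2\sqrt{d}\, \rho(\Lambda) & \text{if } h(\Lambda)\ge 1/2,\\ (1+\sqrt{d})\,\rho(\Lambda) & \text{otherwise.}\end{cases} \]
   Context: For a finite point set $P\subset[0,1]^d$ with at least two points: covering radius $h(P)=\sup_{x\in[0,1]^d}\min_{y\in P}\|x-y\|_2$, separation radius $q(P)=\frac12\min_{x,y\in P,\,x\ne y}\|x-y\|_2$, mesh ratio $\rho(P)=h(P)/q(P)$. For a full-rank lattice $\Lambda\subset\mathbb{R}^d$: $h(\Lambda)=\sup_{x\in\mathbb{R}^d}\min_{y\in\Lambda}\|x-y\|_2$, $q(\Lambda)=\frac12\min_{x\in\Lambda\setminus\{0\}}\|x\|_2$, $\rho(\Lambda)=h(\Lambda)/q(\Lambda)$. *)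

(* Defs.v *)
From HB Require Import structures.
From mathcomp Require Import all_boot all_order all_algebra.
From mathcomp Require Import all_classical all_reals.
Set Implicit Arguments. Unset Strict Implicit. Unset Printing Implicit Defensive.
Import Order.TTheory GRing.Theory Num.Theory.
Local Open Scope classical_set_scope.
Local Open Scope ring_scope.

Section Defs.
Variables (R : realType) (d : nat).

Definition enorm (v : 'rV[R]_d) : R := Num.sqrt (\sum_(i < d) v ord0 i ^+ 2).

(* The lattice generated by the rows of B: { z B | z in Z^d }.
   It is full rank iff B \in unitmx. *)
Definition lattice (B : 'M[R]_d) : set 'rV[R]_d :=
  [set x | exists z : 'rV[int]_d, x = map_mx (fun k : int => k%:~R) z *m B].

Definition dist_to (S : set 'rV[R]_d) (x : 'rV[R]_d) : R :=
  inf [set enorm (x - y) | y in S].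

Definition cube01 : set 'rV[R]_d := [set x | forall i, 0 <= x ord0 i <= 1].

Definition cov_radius (P : set 'rV[R]_d) : R := sup [set dist_to P x | x in cube01].
Definition sep_radius (P : set 'rV[R]_d) : R :=
  inf [set r | exists x y, P x /\ P y /\ x <> y /\ r = enorm (x - y)] / 2.
Definition mesh_ratio (P : set 'rV[R]_d) : R := cov_radius P / sep_radius P.

Definition lat_cov_radius (B : 'M[R]_d) : R :=
  sup [set dist_to (lattice B) x | x in [set: 'rV[R]_d]].
Definition lat_sep_radius (B : 'M[R]_d) : R :=
  inf [set enorm x | x in lattice B `\ 0] / 2.
Definition lat_mesh_ratio (B : 'M[R]_d) : R := lat_cov_radius B / lat_sep_radius B.

Definition shifted_points (B : 'M[R]_d) (D : 'rV[R]_d) : set 'rV[R]_d :=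
  [set x | (exists y, lattice B y /\ x = y + D) /\ forall i, 0 <= x ord0 i < 1].

End Defs.

(* Main.v *)
Require Import Defs.
From HB Require Import structures.
From mathcomp Require Import all_boot all_order all_algebra.
From mathcomp Require Import all_classical all_reals.
From mathcomp Require Import ring lra.
Import Order.TTheory GRing.Theory Num.Theory.
Local Open Scope classical_set_scope.
Local Open Scope ring_scope.
Set Implicit Arguments. Unset Strict Implicit.

Section Norm.
Variables (R : realType) (d : nat).
Implicit Types v w : 'rV[R]_d.

Lemma enorm_ge0 v : 0 <= enorm v. Proof. exact: sqrtr_ge0. Qed.

Lemma sumsq_ge0 (a : 'I_d -> R) : 0 <= \sum_i a i ^+ 2.
Proof. by apply: sumr_ge0 => i _; exact: sqr_ge0. Qed.

Lemma sq_enorm v : enorm v ^+ 2 = \sum_i v ord0 i ^+ 2.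
Proof. by rewrite /enorm sqr_sqrtr // sumsq_ge0. Qed.

Lemma enorm_coord v i : `|v ord0 i| <= enorm v.
Proof.
rewrite -sqrtr_sqr /enorm; apply: ler_wsqrtr.
by rewrite (bigD1 i) //= lerDl; apply: sumr_ge0 => j _; exact: sqr_ge0.
Qed.

Lemma le_sum_term (a : 'I_d -> R) i : (forall j, 0 <= a j) -> a i <= \sum_j a j.
Proof. by move=> h; rewrite (bigD1 i) //= lerDl; apply: sumr_ge0 => j _. Qed.

Lemma enorm_le_sum v : enorm v <= \sum_i `|v ord0 i|.
Proof.
have h0 : 0 <= \sum_i `|v ord0 i| by apply: sumr_ge0 => i _.
rewrite -(ger0_norm h0) -sqrtr_sqr /enorm; apply: ler_wsqrtr.
rewrite expr2 mulr_suml; apply: ler_sum => i _.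
rewrite -real_normK ?num_real // expr2 ler_wpM2l //.
by apply: (le_sum_term (a := fun j => `|v ord0 j|)).
Qed.

Lemma enorm_le_const v a : 0 <= a -> (forall i, `|v ord0 i| <= a) ->
  enorm v <= a * Num.sqrt d%:R.
Proof.
move=> a0 h; rewrite -(ger0_norm a0) -sqrtr_sqr -sqrtrM ?sqr_ge0 //.
apply: ler_wsqrtr.
have -> : a ^+ 2 * d%:R = \sum_(i < d) a ^+ 2 by rewrite sumr_const card_ord mulr_natr.
apply: ler_sum => i _.
rewrite -real_normK ?num_real // !expr2 ler_pM //.
Qed.

Lemma cauchy_schwarz (a b : 'I_d -> R) :
  (\sum_i a i * b i) ^+ 2 <= (\sum_i a i ^+ 2) * (\sum_i b i ^+ 2).
Proof.
set A := \sum_i a i ^+ 2; set Bq := \sum_i b i ^+ 2; set C := \sum_i a i * b i.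
have B0 : 0 <= Bq by exact: sumsq_ge0.
have [Bz|Bp] := eqVneq Bq 0.
  have hb : forall i, b i = 0.
    move=> i; apply/eqP; rewrite -sqrf_eq0; apply/eqP.
    by move: Bz => /eqP; rewrite psumr_eq0 => [/allP /(_ i (mem_index_enum _)) /implyP /(_ isT) /eqP|j _]; [|exact: sqr_ge0].
  have -> : C = 0 by rewrite /C big1 // => i _; rewrite hb mulr0.
  by rewrite Bz expr0n /= mulr0.
have Bpos : 0 < Bq by rewrite lt_def Bp B0.
have E : \sum_i (a i * Bq - C * b i) ^+ 2 = Bq * (A * Bq - C ^+ 2).
  transitivity (\sum_i (Bq ^+ 2 * a i ^+ 2 + (- (2 * Bq * C)) * (a i * b i) + C ^+ 2 * b i ^+ 2)).
    by apply: eq_bigr => i _; ring.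
  rewrite !big_split /= -!mulr_sumr -/A -/Bq -/C; ring.
have : 0 <= Bq * (A * Bq - C ^+ 2) by rewrite -E sumsq_ge0.
by rewrite pmulr_rge0 // subr_ge0 mulrC.
Qed.

Lemma enorm_triangle v w : enorm (v + w) <= enorm v + enorm w.
Proof.
have h0 : 0 <= enorm v + enorm w by rewrite addr_ge0 // enorm_ge0.
rewrite -(ger0_norm h0) -sqrtr_sqr /enorm; apply: ler_wsqrtr.
rewrite -/(enorm v) -/(enorm w).
have -> : \sum_i (v + w) ord0 i ^+ 2 =
   \sum_i v ord0 i ^+ 2 + 2 * (\sum_i v ord0 i * w ord0 i) + \sum_i w ord0 i ^+ 2.
  rewrite mulr_sumr -!big_split /=; apply: eq_bigr => i _; rewrite !mxE; ring.
rewrite -!sq_enorm.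
have : \sum_i v ord0 i * w ord0 i <= enorm v * enorm w.
  apply: le_trans (real_ler_norm (num_real _)) _.
  rewrite -sqrtr_sqr /enorm -sqrtrM ?sumsq_ge0 //.
  exact/ler_wsqrtr/cauchy_schwarz.
move=> h; nra.
Qed.

Lemma enorm_mul v (M : 'M[R]_d) :
  enorm (v *m M) <= enorm v * \sum_j \sum_i `|M i j|.
Proof.
apply: le_trans (enorm_le_sum _) _.
rewrite mulr_sumr; apply: ler_sum => j _; rewrite mxE mulr_sumr.
apply: le_trans (ler_norm_sum _ _ _) _; apply: ler_sum => i _.
by rewrite normrM ler_wpM2r // enorm_coord.
Qed.

Lemma enormN v : enorm (- v) = enorm v.
Proof. by rewrite /enorm; congr Num.sqrt; apply: eq_bigr => i _; rewrite mxE sqrrN. Qed.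

End Norm.
Section Lat.
Variables (R : realType) (d : nat).
Implicit Types v w x y : 'rV[R]_d.

Definition iv (z : 'rV[int]_d) : 'rV[R]_d := map_mx (fun k : int => k%:~R) z.

Lemma lattice0 (B : 'M[R]_d) : lattice B 0.
Proof.
exists 0; apply/matrixP=> i j; rewrite !mxE big1 // => k _; by rewrite !mxE mul0r.
Qed.

Lemma latticeB (B : 'M[R]_d) x y : lattice B x -> lattice B y -> lattice B (x - y).
Proof.
move=> [z1 ->] [z2 ->]; exists (z1 - z2); rewrite -mulmxBl; congr (_ *m B).
by apply/matrixP=> i j; rewrite !mxE intrB.
Qed.

Definition sumabs (M : 'M[R]_d) := \sum_j \sum_i `|M i j|.

Lemma sumabs_ge0 M : 0 <= sumabs M.
Proof. by apply: sumr_ge0 => j _; apply: sumr_ge0. Qed.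

Lemma lattice_discrete (B : 'M[R]_d) x : B \in unitmx -> lattice B x -> x != 0 ->
  1 <= enorm x * sumabs (invmx B).
Proof.
move=> uB [z ->] nz.
have eq : iv z = (iv z *m B) *m invmx B by rewrite mulmxK.
have ivnz : iv z != 0 by apply: contraNneq nz => /= h; rewrite /iv in h; rewrite h mul0mx.
have [i hi] : exists i, iv z ord0 i != 0.
  case: (pickP (fun i => iv z ord0 i != 0)) => [i hi|h]; first by exists i.
  exfalso; move: ivnz => /eqP; apply; apply/matrixP => a b.
  by rewrite ord1 [RHS]mxE; apply/eqP; apply/negbFE; exact: h.
apply: le_trans _ (enorm_mul (iv z *m B) (invmx B)); rewrite -eq; apply: le_trans _ (enorm_coord _ i).
move: hi; rewrite /iv mxE -intr_norm ler1z => hi.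
by rewrite -gtz0_ge1 normr_gt0; move: hi; apply: contraNneq => ->.
Qed.

Lemma lattice_cover (B : 'M[R]_d) x : B \in unitmx ->
  exists2 y, lattice B y & enorm (x - y) <= Num.sqrt d%:R * sumabs B.
Proof.
move=> uB; set w := x *m invmx B.
pose z : 'rV[int]_d := \row_i Num.floor (w ord0 i).
exists (iv z *m B); first by exists z.
have -> : x - iv z *m B = (w - iv z) *m B by rewrite mulmxBl /w mulmxKV.
apply: le_trans (enorm_mul _ _) _; apply: ler_wpM2r; first exact: sumabs_ge0.
rewrite -[X in _ <= X]mul1r; apply: enorm_le_const => // i.
have -> : (w - iv z) ord0 i = w ord0 i - (Num.floor (w ord0 i))%:~R by rewrite /iv !mxE.
have := Rfloor_le (w ord0 i); have := lt_succ_Rfloor (w ord0 i).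
rewrite RfloorE => h1 h2; rewrite ger0_norm; lra.
Qed.

End Lat.
Section Dist.
Variables (R : realType) (d : nat).
Implicit Types x y : 'rV[R]_d.

Lemma dist_lb (S : set 'rV[R]_d) x : has_lbound [set enorm (x - y) | y in S].
Proof. by exists 0 => _ [p _ <-]; exact: enorm_ge0. Qed.

Lemma dist_le (S : set 'rV[R]_d) x y : S y -> dist_to S x <= enorm (x - y).
Proof. move=> Sy; apply: ge_inf; [exact: dist_lb | by exists y]. Qed.

Lemma dist_ge0 (S : set 'rV[R]_d) x : S !=set0 -> 0 <= dist_to S x.
Proof.
move=> [y Sy]; apply: lb_le_inf; first by exists (enorm (x - y)), y.
by move=> _ [p _ <-]; exact: enorm_ge0.
Qed.

Lemma dist_adh (S : set 'rV[R]_d) x e : S !=set0 -> 0 < e ->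
  exists2 y, S y & enorm (x - y) < dist_to S x + e.
Proof.
move=> [y Sy] e0; have [r [p Sp <-] h] := inf_adherent e0 (conj (ex_intro _ _ (ex_intro2 _ _ y Sy erefl)) (dist_lb S x)).
by exists p.
Qed.

End Dist.
Unset Implicit Arguments. Set Strict Implicit.
Theorem mainTheorem4 (R : realType) (d : nat) (B : 'M[R]_d) (D : 'rV[R]_d) :
  B \in unitmx ->
  (exists x y, shifted_points B D x /\ shifted_points B D y /\ x <> y) ->
  mesh_ratio (shifted_points B D) <=
    (if 1 / 2 <= lat_cov_radius B
     then 2 * Num.sqrt (d%:R) * lat_mesh_ratio B
     else (1 + Num.sqrt (d%:R)) * lat_mesh_ratio B).
Proof.
move=> uB [x0 [y0 [Sx0 [Sy0 nxy]]]].
set S := shifted_points B D.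
have SL : forall x y, S x -> S y -> lattice B (x - y).
  move=> x y [[a [La ->]] _] [[b [Lb ->]] _].
  have -> : a + D - (b + D) = a - b by rewrite opprD addrACA subrr addr0.
  exact: latticeB.
set K := sumabs (invmx B).
have Ld0 : (lattice B `\ 0) (x0 - y0).
  by split; [exact: SL | move=> /= /eqP; rewrite subr_eq0 => /eqP].
have K0 : 0 < K.
  have := lattice_discrete uB (SL _ _ Sx0 Sy0) (introN eqP Ld0.2).
  have := sumabs_ge0 (invmx B); rewrite -/K => h1 h2.
  rewrite lt_def h1 andbT; apply/eqP => hK; move: h2; rewrite hK mulr0; lra.
set Ld := [set enorm x | x in lattice B `\ 0].
have infLd : K^-1 <= inf Ld.
  apply: lb_le_inf; first by exists (enorm (x0 - y0)), (x0 - y0).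
  move=> _ [v [Lv nv] <-]; rewrite -div1r ler_pdivrMr //.
  by apply: lattice_discrete => //; apply/eqP.
have qLpos : 0 < lat_sep_radius B.
  rewrite /lat_sep_radius -/Ld divr_gt0 //; apply: lt_le_trans infLd.
  by rewrite invr_gt0.
have qle : lat_sep_radius B <= sep_radius S.
  rewrite /lat_sep_radius /sep_radius -/Ld ler_wpM2r ?invr_ge0 ?ler0n //.
  apply: lb_le_inf; first by exists (enorm (x0 - y0)), x0, y0.
  move=> _ [x [y [Sx [Sy [nxy' ->]]]]]; apply: ge_inf.
    by exists 0 => _ [p _ <-]; exact: enorm_ge0.
  exists (x - y) => //; split; first exact: SL.
  by move=> /= /eqP; rewrite subr_eq0 => /eqP.
have qPpos : 0 < sep_radius S by apply: lt_le_trans qle.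
set hL := lat_cov_radius B.
have Lne : lattice B !=set0 by exists 0; exact: lattice0.
have hLb : forall x, dist_to (lattice B) x <= hL.
  move=> x; apply: ub_le_sup; last by exists x.
  exists (Num.sqrt d%:R * sumabs B) => _ [x' _ <-].
  have [y Ly h] := lattice_cover x' uB; exact: le_trans (dist_le _ Ly) h.
have hL0 : 0 <= hL by apply: le_trans (hLb 0); exact: dist_ge0.
have Sne : S !=set0 by exists x0.
have hPb : forall x, cube01 x -> dist_to S x <= 1 * Num.sqrt d%:R.
  move=> x cx; apply: le_trans (dist_le _ Sx0) _; apply: enorm_le_const => // i.
  have := cx i; case: Sx0 => _ /(_ i); rewrite !mxE => h1 h2.
  rewrite ler_norml; lra.
have c0 : cube01 (0 : 'rV[R]_d) by move=> i; rewrite mxE; lra.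
have hP0 : 0 <= cov_radius S.
  apply: le_trans (dist_ge0 0 Sne) _; apply: ub_le_sup; last by exists 0.
  by exists (1 * Num.sqrt d%:R) => _ [x cx <-]; exact: hPb.
have sq0 : 0 <= Num.sqrt (d%:R : R) by exact: sqrtr_ge0.
set c := if 1 / 2 <= hL then 2 * Num.sqrt (d%:R : R) else 1 + Num.sqrt d%:R.
have hc : cov_radius S <= c * hL.
  apply: ge_sup; first by exists (dist_to S 0), 0.
  move=> _ [x cx <-]; rewrite /c; case: ifP => hcase.
    apply: le_trans (hPb x cx) _; nra.
  move/negbT: hcase; rewrite -ltNge => hlt.
  apply/ler_addgt0Pr => e e0.
  set c' := 1 + Num.sqrt (d%:R : R).
  have c'0 : 0 < c' by rewrite /c'; lra.
  set eps := Num.min (e / c') (1 / 2 - hL).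
  have eps0 : 0 < eps by rewrite lt_min divr_gt0 //=; lra.
  have epsl : eps <= e / c' by rewrite ge_min lexx.
  have epsl2 : eps <= 1 / 2 - hL by rewrite ge_min lexx orbT.
  set t := hL + eps.
  have tle : t <= 1 - t by rewrite /t; lra.
  have t0 : 0 < t by rewrite /t; lra.
  pose x' : 'rV[R]_d := \row_i (if x ord0 i < t then t else if 1 - t < x ord0 i then 1 - t else x ord0 i).
  have [y Ly hy] := dist_adh (x' - D) Lne eps0.
  have hy' : enorm (x' - (y + D)) < t.
    rewrite opprD addrA addrAC; apply: lt_le_trans hy _.
    by rewrite /t lerD2r hLb.
  have Sp : S (y + D).
    split; first by exists y.
    move=> i; have := le_lt_trans (enorm_coord _ i) hy'; rewrite !mxE.
    case: ifP => h1; last case: ifP => h2; rewrite ltr_norml => /andP [u1 u2];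
      apply/andP; split; lra.
  apply: le_trans (dist_le _ Sp) _.
  have -> : x - (y + D) = (x - x') + (x' - (y + D)) by rewrite addrA subrK.
  apply: le_trans (enorm_triangle _ _) _.
  have hx : enorm (x - x') <= t * Num.sqrt d%:R.
    apply: enorm_le_const; first by rewrite /t; lra.
    move=> i; have := cx i; rewrite !mxE.
    case: ifP => h1; last case: ifP => h2; move=> /andP [u1 u2]; rewrite ler_norml;
      apply/andP; split; lra.
  have : c' * eps <= e.
    by rewrite mulrC -ler_pdivlMr.
  rewrite /c' /t in hx hy' * => hce; nra.
have qinv : (sep_radius S)^-1 <= (lat_sep_radius B)^-1.
  by rewrite lef_pV2 ?posrE.
rewrite /mesh_ratio /lat_mesh_ratio -/hL.
have -> : (if 1 / 2 <= hL then 2 * Num.sqrt d%:R * (hL / lat_sep_radius B)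
     else (1 + Num.sqrt d%:R) * (hL / lat_sep_radius B)) = c * hL / lat_sep_radius B.
  by rewrite /c; case: ifP => _; rewrite mulrA.
apply: le_trans (ler_wpM2l hP0 qinv) _.
by apply: ler_wpM2r; [rewrite invr_ge0 ltW | exact: hc].
Qed.
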